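(* (i) Every hyperbolic homogeneous polynomial $f\in\mathbb{R}[x,y]$ has at least one real linear factor, and every real linear factor of a hyperbolic homogeneous polynomial has multiplicity one. (ii) An elliptic homogeneous polynomial $f\in\mathbb{R}[x,y]$ has no real linear factors.
   Context: For a polynomial $f\in\mathbb{R}[x,y]$, its Hessian polynomial is $\mathrm{Hess}\,f=f_{xx}f_{yy}-f_{xy}^2$. A homogeneous polynomial $f\in\mathbb{R}[x,y]$ is called hyperbolic (resp. elliptic) if its Hessian polynomial $\mathrm{Hess}\,f$ has no real linear factors and $\mathrm{Hess}\,f(x,y)\le 0$ (resp. $\ge 0$) for all $(x,y)\in\mathbb{R}^2$. A real linear factor means a factor of the form $ax+by$ with $(a,b)\in\mathbb{R}^2\setminus\{0\}$. *)

(* Defs.v *)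
From HB Require Import structures.
From mathcomp Require Import all_boot all_order all_algebra.
From mathcomp Require Import mpoly.
From mathcomp Require Import reals.

Set Implicit Arguments.
Unset Strict Implicit.
Unset Printing Implicit Defensive.

Import Order.TTheory GRing.Theory Num.Theory.
Local Open Scope ring_scope.

(* Bivariate real polynomials: {mpoly R[2]}, variable x = 'X_0, y = 'X_1.   *)

Section Defs.
Variable R : realType.

Definition x0 : 'I_2 := ord0.
Definition x1 : 'I_2 := ord_max.

Definition homogeneous (f : {mpoly R[2]}) : Prop :=
  exists d : nat, f \is d.-homog.

Definition hess (f : {mpoly R[2]}) : {mpoly R[2]} :=
  (f^`M(x0))^`M(x0) * (f^`M(x1))^`M(x1) - ((f^`M(x0))^`M(x1)) ^+ 2.

Definition ev2 (p : {mpoly R[2]}) (x y : R) : R :=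
  p.@[[ffun i : 'I_2 => if i == x0 then x else y]].

Definition linform (a b : R) : {mpoly R[2]} := a *: 'X_x0 + b *: 'X_x1.

Definition mdvd (g f : {mpoly R[2]}) : Prop := exists q : {mpoly R[2]}, f = q * g.

Definition is_real_linear_factor (a b : R) (p : {mpoly R[2]}) : Prop :=
  (a, b) != (0, 0) /\ mdvd (linform a b) p.

Definition has_real_linear_factor (p : {mpoly R[2]}) : Prop :=
  exists a b : R, is_real_linear_factor a b p.

Definition hyperbolic (f : {mpoly R[2]}) : Prop :=
  homogeneous f /\ ~ has_real_linear_factor (hess f) /\
  forall x y : R, ev2 (hess f) x y <= 0.

Definition elliptic (f : {mpoly R[2]}) : Prop :=
  homogeneous f /\ ~ has_real_linear_factor (hess f) /\
  forall x y : R, 0 <= ev2 (hess f) x y.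

End Defs.

(* Main.v *)
Require Import Defs.
From HB Require Import structures.
From mathcomp Require Import all_boot all_order all_algebra.
From mathcomp Require Import mpoly.
From mathcomp Require Import reals.
From mathcomp Require Import polyrcf.
From mathcomp Require Import ring lra zify.
From Stdlib Require Import Classical.
Import Order.TTheory GRing.Theory Num.Theory.
Local Open Scope ring_scope.

Lemma prod2g (T : comNzRingType) (F : 'I_2 -> T) : \prod_(i < 2) F i = F x0 * F x1.
Proof. by rewrite big_ord_recl big_ord1; congr (_ * F _); exact: val_inj. Qed.

Section Aux.
Variable R : realType.
Implicit Types (p q f : {mpoly R[2]}).

Lemma ord2P (i : 'I_2) : i = x0 \/ i = x1.
Proof. case: i => [[|[|k]] Hk]; [left|right|by []]; exact: val_inj. Qed.

Lemma prod2 (F : 'I_2 -> R) : \prod_(i < 2) F i = F x0 * F x1.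
Proof. by rewrite big_ord_recl big_ord1; congr (_ * F _); exact: val_inj. Qed.

Lemma sum2n (F : 'I_2 -> nat) : (\sum_(i < 2) F i)%N = (F x0 + F x1)%N.
Proof. by rewrite big_ord_recl big_ord1; congr (_ + F _)%N; exact: val_inj. Qed.

Lemma x10 : (x1 == x0) = false. Proof. by []. Qed.

Lemma ev2X m (x y : R) : ev2 'X_[m] x y = x ^+ m x0 * y ^+ m x1.
Proof. by rewrite /ev2 mevalX prod2 !ffunE eqxx x10. Qed.

Lemma mdeg2 (m : 'X_{1..2}) : mdeg m = (m x0 + m x1)%N.
Proof. rewrite mdegE. exact: sum2n. Qed.

Lemma lin_ind (Pr : {mpoly R[2]} -> Prop) p :
  Pr 0 -> (forall p q, Pr p -> Pr q -> Pr (p + q)) ->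
  (forall c m, m \in msupp p -> Pr (c *: 'X_[m])) -> Pr p.
Proof.
move=> H0 HD HM; rewrite (mpolyE p) big_seq.
by elim/big_ind: _ => // m Hm; apply: HM.
Qed.


Lemma x01 : (x0 == x1) = false. Proof. by []. Qed.
Lemma ev2_0 (x y : R) : ev2 0 x y = 0. Proof. exact: meval0. Qed.
Lemma ev2D p q (x y : R) : ev2 (p + q) x y = ev2 p x y + ev2 q x y. Proof. exact: mevalD. Qed.
Lemma ev2B p q (x y : R) : ev2 (p - q) x y = ev2 p x y - ev2 q x y. Proof. exact: mevalB. Qed.
Lemma ev2N p (x y : R) : ev2 (- p) x y = - ev2 p x y. Proof. exact: mevalN. Qed.
Lemma ev2M p q (x y : R) : ev2 (p * q) x y = ev2 p x y * ev2 q x y. Proof. exact: mevalM. Qed.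
Lemma ev2Z c p (x y : R) : ev2 (c *: p) x y = c * ev2 p x y. Proof. exact: mevalZ. Qed.
Lemma ev2C c (x y : R) : ev2 c%:MP x y = c. Proof. exact: mevalC. Qed.
Lemma ev2X0 (x y : R) : ev2 'X_x0 x y = x. Proof. by rewrite /ev2 mevalXU ffunE eqxx. Qed.
Lemma ev2X1 (x y : R) : ev2 'X_x1 x y = y. Proof. by rewrite /ev2 mevalXU ffunE x10. Qed.

Lemma ev2_scale d p (t x y : R) : p \is d.-homog ->
  ev2 p (t * x) (t * y) = t ^+ d * ev2 p x y.
Proof.
move=> /dhomogP Hp; apply: (@lin_ind (fun q => ev2 q (t * x) (t * y) = t ^+ d * ev2 q x y) p).
- by rewrite !ev2_0 mulr0.
- by move=> p1 p2 H1 H2; rewrite !ev2D H1 H2 mulrDr.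
move=> c m /Hp Hd0; have <- : (m x0 + m x1)%N = d by rewrite -mdeg2; exact: Hd0.
rewrite !ev2Z !ev2X !exprMn exprD; ring.
Qed.

Lemma nat_der (a : nat) (x : R) : x * (a%:R * x ^+ (a - 1)) = a%:R * x ^+ a.
Proof. case: a => [|a]; first by rewrite !mul0r mulr0. by rewrite subn1 /= exprS; ring. Qed.

Lemma euler d p (x y : R) : p \is d.-homog ->
  x * ev2 p^`M(x0) x y + y * ev2 p^`M(x1) x y = d%:R * ev2 p x y.
Proof.
move=> /dhomogP Hp; apply: (@lin_ind (fun q =>
  x * ev2 q^`M(x0) x y + y * ev2 q^`M(x1) x y = d%:R * ev2 q x y) p).
- by rewrite !mderiv0 !ev2_0 !mulr0 addr0.
- by move=> p1 p2 H1 H2; rewrite !mderivD !ev2D !mulrDr addrACA H1 H2.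
move=> c m /Hp Hd0; have <- : (m x0 + m x1)%N = d by rewrite -mdeg2; exact: Hd0.
rewrite !mderivZ !mderivX !ev2Z !ev2X !mnmBE !mnm1E !eqxx x10 x01 /= !subn0 natrD.
have h1 := nat_der (m x0) x; have h2 := nat_der (m x1) y.
transitivity (c * (y^+ (m x1) * (x * ((m x0)%:R * x ^+ (m x0 - 1)))) + c * (x ^+ (m x0) * (y * ((m x1)%:R * y ^+ (m x1 - 1))))).
  ring.
rewrite h1 h2; ring.
Qed.

Lemma mderiv_homog d p i : p \is d.-homog -> p^`M(i) \is (d.-1).-homog.
Proof.
move=> /dhomogP Hp; apply: (@lin_ind (fun q => q^`M(i) \is (d.-1).-homog) p).
- by rewrite mderiv0 dhomog0.
- by move=> p1 p2 H1 H2; rewrite mderivD; apply: dhomogD.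
move=> c m /Hp Hd0; have Hd : (m x0 + m x1)%N = d by rewrite -mdeg2; exact: Hd0.
rewrite mderivZ mderivX; apply: dhomogZ.
have [E|E] := eqVneq (m i) 0%N; first by rewrite E scale0r dhomog0.
apply: dhomogZ; rewrite dhomogX; apply/eqP; transitivity (mdeg (m - U_(i))%MM); first by [].
rewrite mdeg2 !mnmBE !mnm1E.
by case: (ord2P i) E => -> E; rewrite ?eqxx ?x10 ?x01 /=; lia.
Qed.

Lemma mderiv_homog0 p i : p \is 0.-homog -> p^`M(i) = 0.
Proof.
move=> /dhomogP Hp; apply: (@lin_ind (fun q => q^`M(i) = 0) p).
- by rewrite mderiv0.
- by move=> p1 p2 H1 H2; rewrite mderivD H1 H2 addr0.
move=> c m /Hp Hd0; have Hd : (m x0 + m x1)%N = 0%N by rewrite -mdeg2; exact: Hd0.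
rewrite mderivZ mderivX.
have -> : m i = 0%N by case: (ord2P i) => ->; lia.
by rewrite scale0r scaler0.
Qed.


Definition phi (P0 P1 : {poly R}) (p : {mpoly R[2]}) : {poly R} :=
  mmap (@polyC R) (fun i => if i == x0 then P0 else P1) p.

Lemma horner_phi P0 P1 p (s : R) : (phi P0 P1 p).[s] = ev2 p P0.[s] P1.[s].
Proof.
apply: (@lin_ind (fun q => (phi P0 P1 q).[s] = ev2 q P0.[s] P1.[s]) p).
- by rewrite /phi mmap0 horner0 ev2_0.
- by move=> p1 p2 H1 H2; rewrite /phi mmapD hornerD -!/(phi _ _ _) H1 H2 ev2D.
move=> c m _; rewrite /phi mmapZ mmapX /mmap1 prod2g eqxx x10 ev2Z ev2X.
by rewrite hornerCM hornerM !horner_exp.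
Qed.

Lemma deriv_phi p : (phi 'X 1 p)^`() = phi 'X 1 (p^`M(x0)).
Proof.
apply: (@lin_ind (fun q => (phi 'X 1 q)^`() = phi 'X 1 (q^`M(x0))) p).
- by rewrite mderiv0 /phi mmap0 deriv0.
- by move=> p1 p2 H1 H2; rewrite mderivD /phi !mmapD derivD -!/(phi _ _ _) H1 H2.
move=> c m _; rewrite mderivZ mderivX /phi !mmapZ !mmapX /mmap1 !prod2g eqxx x10.
rewrite !mnmBE !mnm1E !eqxx x01 /= !expr1n !mulr1 subn1 polyC_natr mulr_natl.
by rewrite derivM derivC mul0r add0r derivXn.
Qed.


Lemma powdiv (T : comNzRingType) (a b : T) k : exists S, a ^+ k = (a - b) * S + b ^+ k.
Proof. by exists (\sum_(i < k) a ^+ (k.-1 - i) * b ^+ i); rewrite -subrXX subrK. Qed.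

Lemma mono2 (m : 'X_{1..2}) : 'X_[m] = 'X_x0 ^+ m x0 * 'X_x1 ^+ m x1 :> {mpoly R[2]}.
Proof. by rewrite mpolyXE_id prod2g. Qed.

Lemma divlin (i j : 'I_2) (c : R) p : i != j ->
  exists q (r : {poly R}), p = q * ('X_i - c *: 'X_j) + (map_poly (@mpolyC 2 R) r).['X_j].
Proof.
move=> nij.
have Hm : forall m : 'X_{1..2}, 'X_[m] = 'X_i ^+ m i * 'X_j ^+ m j :> {mpoly R[2]}.
  move=> m; rewrite mono2; case: (ord2P i) nij => ->; case: (ord2P j) => -> //=.
  by rewrite mulrC.
apply: (@lin_ind (fun p => exists q (r : {poly R}), p = q * ('X_i - c *: 'X_j) + (map_poly (@mpolyC 2 R) r).['X_j]) p).
- by exists 0, 0; rewrite mul0r map_poly0 horner0 addr0.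
- move=> p1 p2 [q1 [r1 ->]] [q2 [r2 ->]]; exists (q1 + q2), (r1 + r2).
  by rewrite raddfD hornerD mulrDl addrACA.
move=> c' m _; rewrite Hm.
have [S HS] := @powdiv _ ('X_i : {mpoly R[2]}) (c *: 'X_j) (m i).
exists (c' *: (S * 'X_j ^+ m j)), ((c' * c ^+ m i) *: 'X^(m i + m j)).
rewrite HS map_polyZ map_polyXn hornerZ hornerXn.
rewrite -!mul_mpolyC rmorphM rmorphXn /= exprD exprMn; ring.
Qed.

Lemma ev2_hornerC (j : 'I_2) (r : {poly R}) (x y : R) :
  ev2 (map_poly (@mpolyC 2 R) r).['X_j] x y = r.[ev2 'X_j x y].
Proof.
rewrite /ev2 -horner_map /= -map_poly_comp map_poly_id // => a _ /=.
exact: mevalC.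
Qed.

Lemma poly_vanish (r : {poly R}) : (forall y, r.[y] = 0) -> r = 0.
Proof.
move=> H; apply: (@roots_geq_poly_eq0 _ r [seq i%:R | i <- iota 0 (size r)]).
- by apply/allP => z /mapP [i _ ->]; apply/rootP.
- rewrite map_inj_uniq ?iota_uniq // => m n /eqP.
  by rewrite eqr_nat => /eqP.
- by rewrite size_map size_iota.
Qed.

Lemma factor_line p (a b : R) : (a, b) != (0, 0) ->
  (forall t, ev2 p (t * a) (t * b) = 0) -> has_real_linear_factor p.
Proof.
move=> nz H.
have [b0|bn0] := eqVneq b 0.
  have an0 : a != 0 by move: nz; rewrite b0 xpair_eqE eqxx andbT.
  have [q [r Hp]] := divlin x1 x0 0 p isT.
  have r0 : r = 0.
    apply: poly_vanish => y; have := H (y / a).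
    rewrite Hp ev2D ev2M ev2B ev2Z ev2X0 ev2X1 ev2_hornerC ev2X0 b0 divfK //.
    by rewrite mulr0 mul0r subr0 mulr0 add0r.
  exists 0, 1; split; first by rewrite xpair_eqE eqxx oner_eq0.
  exists q; rewrite Hp r0 map_poly0 horner0 addr0 /linform scale0r add0r scale1r.
  by rewrite subr0.
have [q [r Hp]] := divlin x0 x1 (a / b) p isT.
have r0 : r = 0.
  apply: poly_vanish => y; have := H (y / b).
  rewrite Hp ev2D ev2M ev2B ev2Z ev2X0 ev2X1 ev2_hornerC ev2X1 divfK //.
  have -> : y / b * a - a / b * y = 0 by field.
  by rewrite mulr0 add0r.
exists 1, (- (a / b)); split; first by rewrite xpair_eqE oner_eq0.
exists q; rewrite Hp r0 map_poly0 horner0 addr0 /linform scale1r.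
by rewrite scaleNr.
Qed.


Lemma zero_factor d p (x y : R) : p \is d.-homog -> (x, y) != (0, 0) ->
  ev2 p x y = 0 -> has_real_linear_factor p.
Proof.
move=> hp nz h0; apply: (@factor_line p x y nz) => t.
by rewrite (ev2_scale _ _ t x y hp) h0 mulr0.
Qed.

Lemma subUU (i : 'I_2) : (U_(i) - U_(i))%MM = 0%MM.
Proof. by apply/mnmP => k; rewrite mnmBE mnm0E subnn. Qed.

Lemma lin_d0 (a b : R) : (linform a b)^`M(x0) = a%:MP.
Proof.
rewrite /linform mderivD !mderivZ !mderivX !mnm1E eqxx x10 /= scale0r scaler0 addr0.
by rewrite subUU mpolyX0 scale1r -mul_mpolyC mulr1.
Qed.

Lemma lin_d1 (a b : R) : (linform a b)^`M(x1) = b%:MP.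
Proof.
rewrite /linform mderivD !mderivZ !mderivX !mnm1E eqxx x01 /= scale0r scaler0 add0r.
by rewrite subUU mpolyX0 scale1r -mul_mpolyC mulr1.
Qed.

Lemma ev2_lin (a b x y : R) : ev2 (linform a b) x y = a * x + b * y.
Proof. by rewrite /linform ev2D !ev2Z ev2X0 ev2X1. Qed.

Lemma hess_ev2 f (x y : R) : ev2 (hess f) x y =
  ev2 f^`M(x0)^`M(x0) x y * ev2 f^`M(x1)^`M(x1) x y - (ev2 f^`M(x0)^`M(x1) x y) ^+ 2.
Proof. by rewrite /hess ev2B ev2M expr2 ev2M expr2. Qed.

Lemma elliptic_nf f : elliptic f -> ~ has_real_linear_factor f.
Proof.
move=> [_ [nh hpos]] [a [b [nz [q Hf]]]]; apply: nh.
have nz' : (- b, a) != (0, 0).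
  by move: nz; rewrite !xpair_eqE oppr_eq0 andbC.
apply: (@factor_line _ _ _ nz') => t.
set x := t * - b; set y := t * a.
have hL : ev2 (a *: 'X_x0) x y + ev2 (b *: 'X_x1) x y = 0 by rewrite !ev2Z ev2X0 ev2X1 /x /y; ring.
have key : ev2 (hess f) x y = - (a * ev2 q^`M(x1) x y - b * ev2 q^`M(x0) x y) ^+ 2.
  rewrite hess_ev2 Hf !(mderivD, mderivM, lin_d0, lin_d1, mderivC, mulr0, addr0).
  rewrite !(ev2D, ev2M, ev2C) hL; ring.
apply/eqP; rewrite eq_le hpos andbT key.
by rewrite oppr_le0 sqr_ge0.
Qed.

Lemma hyper_simple f (a b : R) : hyperbolic f -> is_real_linear_factor a b f ->
  ~ mdvd (linform a b ^+ 2) f.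
Proof.
move=> [_ [nh _]] [nz _] [q Hf]; apply: nh.
have nz' : (- b, a) != (0, 0).
  by move: nz; rewrite !xpair_eqE oppr_eq0 andbC.
apply: (@factor_line _ _ _ nz') => t.
set x := t * - b; set y := t * a.
have hL : ev2 (a *: 'X_x0) x y + ev2 (b *: 'X_x1) x y = 0 by rewrite !ev2Z ev2X0 ev2X1 /x /y; ring.
rewrite hess_ev2 Hf expr2 !(mderivD, mderivM, lin_d0, lin_d1, mderivC, mulr0, addr0).
rewrite !(ev2D, ev2M, ev2C) hL; ring.
Qed.


Lemma hess_opp f : hess (- f) = hess f.
Proof. by rewrite /hess !mderivN mulrNN sqrrN. Qed.

Lemma hess_homog n f : f \is n.-homog -> hess f \is (n.-1.-1 + n.-1.-1).-homog.
Proof.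
move=> hf.
have h00 := @mderiv_homog _ _ x0 (@mderiv_homog _ _ x0 hf).
have h01 := @mderiv_homog _ _ x1 (@mderiv_homog _ _ x0 hf).
have h11 := @mderiv_homog _ _ x1 (@mderiv_homog _ _ x1 hf).
rewrite /hess expr2; apply: dhomogD; first exact: dhomogM.
by rewrite dhomogN; apply: dhomogM.
Qed.

Lemma homogN k p : p \is k.-homog -> - p \is k.-homog.
Proof. by rewrite dhomogN. Qed.

Lemma sign_far k p (a : R) : p \is k.-homog -> 0 < ev2 p a 0 ->
  exists2 M, 0 < M & 0 < ev2 p (a * M) 1.
Proof.
move=> hp hpos.
set r := phi a%:P 'X p.
have hr s : r.[s] = ev2 p a s by rewrite /r horner_phi hornerC hornerX.
have [d d0 Hd] := poly_cont 0 r hpos.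
set s := d / 2.
have s0 : 0 < s by rewrite /s divr_gt0.
have : `|r.[s] - r.[0]| < ev2 p a 0 by apply: Hd; rewrite subr0 gtr0_norm // /s; lra.
rewrite !hr ltr_norml => /andP [h1 _].
have rs0 : 0 < ev2 p a s by lra.
exists s^-1; first by rewrite invr_gt0.
have -> : ev2 p (a * s^-1) 1 = ev2 p (s^-1 * a) (s^-1 * s) by rewrite mulrC mulVf ?gt_eqF.
by rewrite (ev2_scale _ _ _ _ _ hp) mulr_gt0 // exprn_gt0 // invr_gt0.
Qed.

Lemma sign_far_neg k p (a : R) : p \is k.-homog -> ev2 p a 0 < 0 ->
  exists2 M, 0 < M & ev2 p (a * M) 1 < 0.
Proof.
move=> hp hneg; have h : 0 < ev2 (- p) a 0 by rewrite ev2N oppr_gt0.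
have [M M0 HM] := @sign_far _ _ a (@homogN _ _ hp) h.
by exists M => //; move: HM; rewrite ev2N oppr_gt0.
Qed.


Lemma exist_pt n f : f \is n.-homog -> (0 < n)%N ->
  (forall x y, (x, y) != (0, 0) -> ev2 f x y != 0) -> 0 < ev2 f 0 1 ->
  exists t0, 0 <= ev2 (hess f) t0 1.
Proof.
move=> hf n0 nzf f01.
set q := phi 'X 1 f.
have hq s : q.[s] = ev2 f s 1 by rewrite /q horner_phi hornerC hornerX.
have nz1 : forall t : R, (t, 1 : R) != (0, 0) by move=> t; rewrite xpair_eqE oner_eq0 andbF.
have pos : forall t, 0 < ev2 f t 1.
  move=> t; rewrite ltNge; apply/negP => ht.
  have [le0t|lt0] := lerP 0 t.
    have hpr : q.[0] * q.[t] <= 0 by rewrite !hq mulr_ge0_le0 // ltW.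
    have [s _ /rootP] := polyrcf.poly_ivt le0t hpr.
    by rewrite hq => /eqP; apply/negP/nzf.
  have hpr : q.[t] * q.[0] <= 0 by rewrite !hq mulr_le0_ge0 // ltW.
  have [s _ /rootP] := polyrcf.poly_ivt (ltW lt0) hpr.
  by rewrite hq => /eqP; apply/negP/nzf.
have pos_end : forall a : R, a != 0 -> 0 < ev2 f a 0.
  move=> a a0; have := nzf a 0; rewrite xpair_eqE (negPf a0) /= => /(_ isT) h.
  rewrite lt_neqAle eq_sym h /= leNgt; apply/negP => hlt.
  have [M _ HM] := @sign_far_neg _ _ _ hf hlt.
  by have := pos (a * M); rewrite ltNge (ltW HM).
have f10 := pos_end 1 (oner_neq0 _).
have fm10 := pos_end (-1) (ltr0_neq0 (ltrN10 R)).
have hf0 := @mderiv_homog _ _ x0 hf.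
have hf1 := @mderiv_homog _ _ x1 hf.
have nR : 0 < n%:R :> R by rewrite ltr0n.
have e1 := @euler _ _ 1 0 hf; have em1 := @euler _ _ (-1) 0 hf.
have g10 : 0 < ev2 f^`M(x0) 1 0 by move: e1; rewrite mul0r addr0 mul1r => ->; apply: mulr_gt0.
have gm10 : ev2 f^`M(x0) (-1) 0 < 0.
  move: em1; rewrite mul0r addr0 mulN1r => /eqP; rewrite eqr_oppLR => /eqP ->.
  by rewrite oppr_lt0 mulr_gt0.
have [T T0 HT] := @sign_far _ _ _ hf0 g10.
have [M M0 HM] := @sign_far_neg _ _ _ hf0 gm10.
set g := phi 'X 1 f^`M(x0).
have hg s : g.[s] = ev2 f^`M(x0) s 1 by rewrite /g horner_phi hornerC hornerX.
set S := -1 * M; set T' := 1 * T.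
have ST : S < T' by rewrite /S /T'; lra.
have gS : g.[S] < 0 by rewrite hg.
have gT : 0 < g.[T'] by rewrite hg.
case: (prev_rootP g S T') => [g0|y gn0 gy0 hy hnr|c gn0 hc hnr].
- by move: gT; rewrite g0 horner0 ltxx.
- exists y.
  move: hy; rewrite in_itv /= => /andP [hSy hyT].
  have /factor_theorem [h Hgh] : root g y by apply/rootP.
  have hT : 0 < h.[T'].
    by move: gT; rewrite Hgh hornerM hornerXsubC pmulr_lgt0 // subr_gt0.
  have hy0 : 0 <= h.[y].
    rewrite leNgt; apply/negP => hlt.
    have hpr : h.[y] * h.[T'] < 0 by rewrite pmulr_llt0.
    have [z hz /rootP rz] := poly_ivtoo (ltW hyT) hpr.
    by have := hnr z hz; rewrite rootE Hgh hornerM rz mul0r eqxx.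
  have dg : g^`().[y] = h.[y].
    by rewrite Hgh derivM derivXsubC mulr1 hornerD hornerM hornerXsubC subrr mulr0 add0r.
  have A0 : 0 <= ev2 f^`M(x0)^`M(x0) y 1.
    by move: dg; rewrite /g deriv_phi horner_phi hornerC hornerX => ->.
  have F0 := pos y.
  have fy0 : ev2 f^`M(x0) y 1 = 0 by rewrite -hg.
  have E0 := @euler _ _ y 1 hf0.
  have E := @euler _ _ y 1 hf.
  have E1 := @euler _ _ y 1 hf1.
  have hc : f^`M(x1)^`M(x0) = f^`M(x0)^`M(x1) by apply: mderiv_comm.
  rewrite hc in E1.
  rewrite fy0 mulr0 mul1r in E0.
  rewrite fy0 mulr0 add0r mul1r in E.
  rewrite mul1r E in E1.
  have -> : ev2 (hess f) y 1 = (n.-1)%:R * n%:R * ev2 f y 1 * ev2 f^`M(x0)^`M(x0) y 1.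
    rewrite hess_ev2.
    have -> : ev2 f^`M(x1)^`M(x1) y 1 = (n.-1)%:R * (n%:R * ev2 f y 1) - y * ev2 f^`M(x0)^`M(x1) y 1 by rewrite -E1; ring.
    have -> : ev2 f^`M(x0)^`M(x1) y 1 = - (y * ev2 f^`M(x0)^`M(x0) y 1).
      by apply/eqP; rewrite -addr_eq0 addrC E0.
    ring.
  by rewrite !mulr_ge0 // ltW.
- have hpr : g.[S] * g.[T'] < 0 by rewrite pmulr_llt0.
  have [z hz /rootP rz] := poly_ivtoo (ltW ST) hpr.
  by have := hnr z hz; rewrite rootE rz eqxx.
Qed.

End Aux.

Theorem lemma1 (R : realType) :
  (forall f : {mpoly R[2]}, hyperbolic f ->
     has_real_linear_factor f /\
     (forall a b : R, is_real_linear_factor a b f ->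
        ~ mdvd (linform a b ^+ 2) f)) /\
  (forall f : {mpoly R[2]}, elliptic f -> ~ has_real_linear_factor f).
Proof.
split; last by move=> f; exact: elliptic_nf.
move=> f hyp; split; last by move=> a b; exact: hyper_simple.
case: (classic (has_real_linear_factor f)) => // nf; exfalso.
have [[n hn] [nh hneg]] := hyp.
have [n0|npos] := posnP n.
  apply: nh; rewrite n0 in hn.
  have z0 := @mderiv_homog0 _ _ x0 hn; have z1 := @mderiv_homog0 _ _ x1 hn.
  have -> : hess f = 0 by rewrite /hess z0 z1 !mderiv0 mulr0 expr2 mulr0 subr0.
  exists 1, 0; split; first by rewrite xpair_eqE oner_eq0.
  by exists 0; rewrite mul0r.
have nzf : forall x y : R, (x, y) != (0, 0) -> ev2 f x y != 0.
  move=> x y nz; apply/eqP => h0; apply: nf; exact: (@zero_factor _ _ _ _ _ hn nz h0).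
have f01 : ev2 f 0 1 != 0 by apply: nzf; rewrite xpair_eqE oner_eq0 andbF.
have [t0 ht0] : exists t0, 0 <= ev2 (hess f) t0 1.
  case: (ltP 0 (ev2 f 0 1)) => h.
    exact: (@exist_pt _ _ _ hn npos nzf h).
  rewrite -hess_opp; apply: (@exist_pt _ _ _ (@homogN _ _ _ hn) npos).
    by move=> x y nz; rewrite ev2N oppr_eq0; exact: nzf.
  by rewrite ev2N oppr_gt0 lt_neqAle f01 h.
have h0 : ev2 (hess f) t0 1 = 0 by apply/eqP; rewrite eq_le hneg ht0.
apply: nh; apply: (@zero_factor _ _ _ _ _ (@hess_homog _ _ _ hn) _ h0).
by rewrite xpair_eqE oner_eq0 andbF.
Qed.
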